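(* Let $r,n,\delta\ge 2$ be natural numbers, let $m := \max\{\binom{rn-1}{r-1}n^2, \delta\}$ and $N := \binom{m-1}{n-1}$. Let $G$ be the graph with vertices $v_{i,j,k}$ for $i\in[n]$, $j\in[N]$, $k\in[m]$, and vertices $s_{i,X}$ for $i\in[n]$ and $X\subseteq[m]$ with $|X|=n$, whose edges are: $v_{i,j,k}v_{i',j',k'}$ whenever $i\neq i'$ and $k=k'$; and $s_{i,X}v_{i,j,k}$ whenever $k\in X$ (for all $j\in[N]$). Then $\chi_r(G)=rn$.
   Context: $[t]=\{1,\dots,t\}$. There are no other edges in $G$ than those listed. A proper $k$-colouring of a graph $G$ is a map $c\colon V(G)\to[k]$ with $c(u)\neq c(v)$ for every edge $uv$. An $r$-dynamic $k$-colouring is a proper $k$-colouring $c$ such that for every vertex $v$, $|c(N(v))|\ge\min\{r,d(v)\}$, where $N(v)$ is the neighbourhood and $d(v)$ the degree of $v$. $\chi_r(G)$ is the least $k$ for which $G$ has an $r$-dynamic $k$-colouring. *)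

(* Defs.v *)
From mathcomp Require Import all_boot.
Set Implicit Arguments. Unset Strict Implicit. Unset Printing Implicit Defensive.

Section Dyn.
Variables (T : finType) (e : rel T).

Definition nbhd (v : T) : {set T} := [set u | e v u].
Definition deg (v : T) : nat := #|nbhd v|.

Definition proper_col (k : nat) (c : T -> 'I_k) : Prop :=
  forall u v, e u v -> c u <> c v.

Definition dynamic_col (r k : nat) (c : T -> 'I_k) : Prop :=
  proper_col c /\ forall v, minn r (deg v) <= #|c @: nbhd v|.

Definition has_dynamic_col (r k : nat) : Prop :=
  exists c : T -> 'I_k, dynamic_col r c.

Definition chi_dyn_eq (r x : nat) : Prop :=
  has_dynamic_col r x /\ forall k, has_dynamic_col r k -> x <= k.
End Dyn.

Definition mpar (r n delta : nat) : nat :=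
  maxn ('C(r * n - 1, r - 1) * n ^ 2) delta.
Definition Npar (r n delta : nat) : nat := 'C(mpar r n delta - 1, n - 1).

(* vertices: inl (i, j, k) = v_{i,j,k}; inr (i, X) = s_{i,X} *)
Definition Vtx (n N m : nat) : finType :=
  (('I_n * 'I_N * 'I_m) + ('I_n * {X : {set 'I_m} | #|X| == n}))%type.

Definition Gedge (n N m : nat) : rel (Vtx n N m) :=
  fun a b =>
    match a, b with
    | inl x, inl y => (x.1.1 != y.1.1) && (x.2 == y.2)
    | inr s, inl y => (s.1 == y.1.1) && (y.2 \in val s.2)
    | inl x, inr s => (s.1 == x.1.1) && (x.2 \in val s.2)
    | inr _, inr _ => false
    end.

(* Main.v *)
Require Import Defs.
From mathcomp Require Import all_boot zify.
Set Implicit Arguments. Unset Strict Implicit. Unset Printing Implicit Defensive.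

Lemma sub_extract (T : finType) (A : {set T}) t :
  t <= #|A| -> exists B : {set T}, B \subset A /\ #|B| = t.
Proof.
elim: t => [|t IH] H.
  by exists set0; rewrite sub0set cards0.
have [B [HBA HB]] := IH (ltnW H).
have : 0 < #|A :\: B|.
  by rewrite cardsD (setIidPr HBA) HB subn_gt0.
case/card_gt0P => x; rewrite inE => /andP [HxB HxA].
exists (x |: B); split.
  by rewrite subUset sub1set HxA HBA.
by rewrite cardsU1 HxB HB.
Qed.

Lemma sup_extend (T : finType) (A : {set T}) t :
  #|A| <= t -> t <= #|T| -> exists S : {set T}, A \subset S /\ #|S| = t.
Proof.
move=> H1 H2.
have H3 : t - #|A| <= #|~: A|.
  have := cardsC A; lia.
have [B [HB HBc]] := sub_extract H3.
exists (A :|: B); split; first exact: subsetUl.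
have Hd : [disjoint A & B] by rewrite disjoint_sym disjoints_subset.
have := (leq_card_setU A B).2; rewrite Hd => /eqP ->.
lia.
Qed.

Lemma union_bound (I T : finType) (F : I -> {set T}) (s : seq I) b :
  (forall i, i \in s -> #|F i| <= b) -> #|\bigcup_(i <- s) F i| <= size s * b.
Proof.
elim: s => [|a s IH] H; first by rewrite big_nil cards0.
rewrite big_cons /= mulSn.
apply: leq_trans (leq_card_setU _ _).1 _.
apply: leq_add; first by apply: H; rewrite inE eqxx.
by apply: IH => i Hi; apply: H; rewrite inE Hi orbT.
Qed.

Lemma disj_lower (I T : finType) (F : I -> {set T}) (s : seq I) b :
  uniq s -> (forall i, i \in s -> b <= #|F i|) ->
  (forall i j, i \in s -> j \in s -> i != j -> [disjoint F i & F j]) ->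
  size s * b <= #|\bigcup_(i <- s) F i|.
Proof.
elim: s => [|a s IH] //= /andP [Has Hu] Hb Hd.
rewrite big_cons mulSn.
have Hdis : [disjoint F a & \bigcup_(i <- s) F i].
  rewrite bigcup_seq; apply: bigcup_disjoint => j Hj.
  apply: Hd; rewrite ?inE ?eqxx ?Hj ?orbT //.
  by apply: contraNneq Has => ->.
have := (leq_card_setU (F a) (\bigcup_(i <- s) F i)).2; rewrite Hdis => /eqP ->.
apply: leq_add; first by apply: Hb; rewrite inE eqxx.
apply: IH => //; first by move=> i Hi; apply: Hb; rewrite inE Hi orbT.
by move=> i j Hi Hj; apply: Hd; rewrite inE ?Hi ?Hj orbT.
Qed.

Lemma bin_ge a b : 0 < b -> b < a -> a <= 'C(a, b).
Proof.
elim: a b => [|a IH] [|b] //= _ Hb.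
case: b Hb => [|b] Hb; first by rewrite bin1.
rewrite binS.
have H1 := IH b.+1 isT Hb.
have H2 : 0 < 'C(a, b.+2) by rewrite bin_gt0.
lia.
Qed.

Lemma dyn_ge (T : finType) (e : rel T) K (c : T -> 'I_K) v r (g : 'I_r -> T) :
  (forall t, e v (g t)) -> injective (fun t => c (g t)) ->
  minn r (deg e v) <= #|c @: nbhd e v|.
Proof.
move=> Hg Hinj.
apply: leq_trans (geq_minl _ _) _.
have <- : #|[set c (g t) | t in 'I_r]| = r by rewrite card_imset // card_ord.
apply: subset_leq_card; apply/subsetP => x /imsetP [t _ ->].
by apply/imsetP; exists (g t); rewrite // inE.
Qed.

Lemma modS_neq n i : 2 <= n -> i < n -> i.+1 %% n != i.
Proof.
move=> Hn Hi; case: (ltnP i.+1 n) => H.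
  by rewrite modn_small // neq_ltn ltnSn orbT.
have -> : i.+1 = n by lia.
rewrite modnn; lia.
Qed.

Lemma modn_lin n i a : i < n -> (i + n * a) %% n = i.
Proof.
by move=> Hi; rewrite addnC mulnC modnMDl modn_small.
Qed.

Definition code n N m r (x : Vtx n N m) : nat :=
  match x with
  | inl y => y.1.1 + n * (y.1.2 %% r)
  | inr s => (s.1.+1 %% n)
  end.

Lemma upper r n N m : 2 <= n -> 0 < r -> r <= N ->
  has_dynamic_col (@Gedge n N m) r (r * n).
Proof.
move=> Hn Hr HrN.
have Hrn : 0 < r * n by rewrite muln_gt0 Hr; lia.
have Hlt : forall x : Vtx n N m, code r x < r * n.
  case=> [[[i j] k]|[i X]] /=.
    have := ltn_pmod j Hr; have := ltn_ord i; nia.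
  have := ltn_pmod i.+1 (ltnW Hn); nia.
pose c := fun x : Vtx n N m => Ordinal (Hlt x).
have Hcv : forall x y, c x = c y -> code r x = code r y.
  by move=> x y /(congr1 val).
have Hmod : forall x : Vtx n N m, code r x %% n =
   match x with inl y => nat_of_ord y.1.1 | inr s => s.1.+1 %% n end.
  move=> x; case: x => [y|s] /=.
    by rewrite modn_lin.
  by rewrite modn_mod.
have HnS : forall i : 'I_n, i.+1 %% n < n by move=> i; apply: ltn_pmod; lia.
exists c; split.
  case=> [[[i j] k]|[i X]] [[[i' j'] k']|[i' X']] //= He /Hcv /(congr1 (modn^~ n)).
  - rewrite !Hmod /=; case/andP: He => /eqP He _ Hii; apply: He; exact: val_inj.
  - rewrite !Hmod /=; case/andP: He => /eqP <- _ Hii.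
    by move: (modS_neq Hn (ltn_ord i')); rewrite -Hii eqxx.
  - rewrite !Hmod /=; case/andP: He => /eqP <- _ Hii.
    by move: (modS_neq Hn (ltn_ord i)); rewrite Hii eqxx.
case=> [[[i j] k]|[i X]].
  pose i' := Ordinal (HnS i).
  apply: (@dyn_ge _ _ _ c _ r (fun t => inl (i', widen_ord HrN t, k))).
    move=> t /=; rewrite eqxx andbT; apply/eqP => /(congr1 val) /= H.
    by move: (modS_neq Hn (ltn_ord i)); rewrite -H eqxx.
  move=> t t' /Hcv /= /eqP; rewrite eqn_add2l eqn_pmul2l; last lia.
  rewrite !modn_small // => /eqP; exact: val_inj.
have [k0 Hk0] : exists k0, k0 \in val X.
  by apply/card_gt0P; rewrite (eqP (valP X)); lia.
apply: (@dyn_ge _ _ _ c _ r (fun t => inl (i, widen_ord HrN t, k0))).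
  by move=> t /=; rewrite eqxx Hk0.
move=> t t' /Hcv /= /eqP; rewrite eqn_add2l eqn_pmul2l; last lia.
rewrite !modn_small // => /eqP; exact: val_inj.
Qed.

Lemma lower r n N m K : 2 <= r -> 2 <= n -> r <= N -> n <= m ->
  n * n * 'C(r * n - 1, r - 1) <= m ->
  has_dynamic_col (@Gedge n N m) r K -> r * n <= K.
Proof.
move=> Hr Hn HrN Hnm Hm [c [Hprop Hdyn]].
pose C (i : 'I_n) (k : 'I_m) : {set 'I_K} :=
  [set c (inl (i, j, k)) | j : 'I_N].
have FA : forall i (X : {X : {set 'I_m} | #|X| == n}),
    r <= #|\bigcup_(k in val X) C i k|.
  move=> i X.
  have [k0 Hk0] : exists k0, k0 \in val X.
    by apply/card_gt0P; rewrite (eqP (valP X)); lia.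
  have Hdeg : r <= deg (@Gedge n N m) (inr (i, X)).
    have HN : #|[set (inl (i, j, k0) : Vtx n N m) | j : 'I_N]| = N.
      by rewrite card_imset ?card_ord // => j j' [].
    apply: (leq_trans HrN); apply: (leq_trans (eq_leq (esym HN))).
    rewrite /deg; apply: (@subset_leq_card (Vtx n N m)); apply/subsetP => x /imsetP [j _ ->].
    by rewrite inE /= eqxx Hk0.
  have := Hdyn (inr (i, X)).
  rewrite (minn_idPl Hdeg) => H; apply: leq_trans H _.
  apply: subset_leq_card; apply/subsetP => y /imsetP [x].
  rewrite inE; case: x => [[[i' j] k]|] //= /andP [/eqP <- Hk] ->.
  apply/bigcupP; exists k => //.
  by apply/imsetP; exists j.
have FB : forall k i i', i != i' -> [disjoint C i k & C i' k].
  move=> k i i' Hii; rewrite -setI_eq0; apply/eqP/setP => x.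
  rewrite !inE; apply/negP => /andP [/imsetP [j _ ->] /imsetP [j' _]].
  by apply: Hprop; rewrite /= Hii eqxx.
have [HK|HK] := ltnP K r.
  have Hw : forall i : 'I_n, i < m by move=> i; apply: leq_trans (ltn_ord i) Hnm.
  pose X0 := [set Ordinal (Hw i) | i : 'I_n].
  have HX0 : #|X0| == n.
    by rewrite card_imset ?card_ord // => i i' /(congr1 val) /= /val_inj.
  have i0 : 'I_n by exists 0; lia.
  move: (FA i0 (exist _ X0 HX0)) => /= H1.
  have H2 := leq_trans H1 (max_card _); rewrite card_ord in H2; lia.
rewrite leqNgt; apply/negP => HKrn.
pose P := [set S : {set 'I_K} | #|S| == r - 1].
have HP : #|P| = 'C(K, r - 1) by rewrite card_draws card_ord.
pose F (i : 'I_n) (S : {set 'I_K}) := [set k : 'I_m | C i k \subset S].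
have FF : forall i S, S \in P -> #|F i S| <= n - 1.
  move=> i S; rewrite inE => /eqP HS.
  rewrite leqNgt; apply/negP => Hlt.
  have [B [HB HBc]] := sub_extract (t:=n) (A := F i S) ltac:(lia).
  have HBn : #|B| == n by rewrite HBc.
  have := FA i (exist _ B HBn) => /=.
  have : \bigcup_(k in B) C i k \subset S.
    apply/bigcupsP => k Hk.
    by have := subsetP HB k Hk; rewrite inE.
  move/subset_leq_card => H1 H2; have := leq_trans H2 H1; rewrite HS; lia.
pose Bad := [set k : 'I_m | [exists i, #|C i k| < r]].
have HBad : Bad \subset \bigcup_(i <- enum 'I_n) \bigcup_(S <- enum P) F i S.
  apply/subsetP => k; rewrite inE => /existsP [i Hi].
  have [S [HS HSc]] := sup_extend (t := r - 1) (A := C i k) ltac:(lia)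
    ltac:(rewrite card_ord; lia).
  rewrite bigcup_seq; apply/bigcupP; exists i; first by rewrite mem_enum.
  rewrite bigcup_seq; apply/bigcupP; exists S; first by rewrite mem_enum inE HSc.
  by rewrite inE.
have HBc : #|Bad| <= n * ('C(K, r - 1) * (n - 1)).
  apply: leq_trans (subset_leq_card HBad) _.
  have HU := @union_bound _ _ (fun i => \bigcup_(S <- enum P) F i S) (enum 'I_n)
     ('C(K, r - 1) * (n - 1)).
  rewrite size_enum_ord in HU; apply: HU => i _.
  have HU2 := @union_bound _ _ (F i) (enum P) (n - 1).
  rewrite -cardE HP in HU2; apply: HU2 => S; rewrite mem_enum; exact: FF.
have Hb1 : 'C(K, r - 1) <= 'C(r * n - 1, r - 1) by apply: leq_bin2l; lia.
have Hb0 : 0 < 'C(K, r - 1) by rewrite bin_gt0; lia.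
have HBm : #|Bad| < m.
  apply: (leq_trans _ Hm); apply: (leq_ltn_trans HBc).
  have H3 : n * ('C(K, r - 1) * (n - 1)) < n * n * 'C(K, r - 1).
    nia.
  apply: (leq_trans H3); rewrite leq_mul2l; apply/orP; right; exact: Hb1.
have /card_gt0P [k Hk] : 0 < #|~: Bad|.
  have := cardsC Bad; rewrite card_ord; lia.
have Hi : forall i, r <= #|C i k|.
  move=> i; rewrite leqNgt; apply: contraT; rewrite negbK => H.
  by move: Hk; rewrite !inE negb_exists => /forallP /(_ i); rewrite H.
have HL := @disj_lower _ _ (fun i => C i k) (enum 'I_n) r (enum_uniq _).
rewrite size_enum_ord in HL.
have := leq_trans (HL (fun i _ => Hi i) (fun i j _ _ => FB k i j)) (max_card _).
rewrite card_ord; lia.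
Qed.

Theorem lemma2p3 (r n delta : nat) :
  2 <= r -> 2 <= n -> 2 <= delta ->
  chi_dyn_eq (@Gedge n (Npar r n delta) (mpar r n delta)) r (r * n).
Proof.
move=> Hr Hn Hd.
set m := mpar r n delta.
set N := Npar r n delta.
set Cb := 'C(r * n - 1, r - 1).
have HCb : r * n - 1 <= Cb by apply: bin_ge; nia.
have Hm : Cb * n ^ 2 <= m by apply: leq_maxl.
have Hm' : n * n * Cb <= m by move: Hm; rewrite expnS expn1; lia.
have Hnm : n < m by nia.
have Hrm : r < m by nia.
have HN : m - 1 <= N by apply: bin_ge; lia.
have HrN : r <= N by lia.
split.
  apply: upper => //; lia.
move=> k Hk; apply: (lower (N:=N) (m:=m)) Hk => //; lia.
Qed.
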